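(* Let $\rho=(a,2t,b)$, i.e. $\rho(x,y)=ax^2+2txy+by^2$, be a positive definite binary quadratic form with $(2t)^2-4ab=-4\Omega C<0$, such that $2\parallel t$ and $\gcd(a,2t,b)=4$. Assume that $C=2$ or $C$ is twice an odd prime, that $\Omega>0$ is even, and let $\Delta>0$ be an odd integer with $\gcd(C,\Delta)=1$ such that the congruences $$R^2+\Delta a\equiv 0,\qquad RS-\Delta t\equiv 0,\qquad S^2+\Delta b\equiv 0 \pmod C$$ are solvable in integers $R,S$. Then $\rho$ is properly represented by a positive definite properly primitive ternary quadratic form $f$ with invariants $\Omega$ and $\Delta$, and the reciprocal $F$ of $f$ is improperly primitive.
   Context: A ternary quadratic form is $f(x,y,z)=a_{11}x^2+a_{22}y^2+a_{33}z^2+2a_{23}yz+2a_{13}xz+2a_{12}xy$ with $a_{ij}\in\mathbb{Z}$, with symmetric matrix $A=(a_{ij})$. Let $\tau=\gcd(a_{11},a_{22},a_{33},a_{23},a_{13},a_{12})$ and $\sigma=\gcd(a_{11},a_{22},a_{33},2a_{23},2a_{13},2a_{12})$. $f$ is primitive if $\tau=1$, properly primitive if $\sigma=\tau=1$, improperly primitive if $\tau=1,\sigma=2$. Let $A_{ij}$ be the $(i,j)$-cofactor of $A$, $\Omega=\gcd(A_{11},A_{22},A_{33},A_{23},A_{13},A_{12})$, and for primitive $f$ define $\Delta$ by $\det(A)=\Delta\Omega^2$; $\Omega,\Delta$ are the invariants of $f$. The reciprocal of $f$ is $F=\frac1\Omega\sum_{i,j}A_{ij}X_iX_j$. A binary form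 with matrix $B$ is represented by $f$ if there is an integer $3\times 2$ matrix $M$ with $M^{t}AM=B$, and properly represented if moreover the $2\times 2$ minors of $M$ are coprime. The binary form $(a,2t,b)$ has matrix $\begin{pmatrix}a&t\\t&b\end{pmatrix}$. *)

(* Defs.v *)
From mathcomp Require Import all_boot all_order all_algebra.
Set Implicit Arguments. Unset Strict Implicit. Unset Printing Implicit Defensive.
Import Order.TTheory GRing.Theory Num.Theory.
Local Open Scope ring_scope.

(* Ternary (3x3) and binary (2x2) integral quadratic forms are represented by
   their symmetric integer matrices A = (a_ij); indices are 0-based here. *)

Definition ent (n : nat) (A : 'M[int]_n.+1) (i j : nat) : int := A (inord i) (inord j).

Definition symmx (n : nat) (A : 'M[int]_n) : Prop := A^T = A.

Definition pos_def (n : nat) (A : 'M[int]_n) : Prop :=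
  forall x : 'cV[int]_n, x != 0 -> 0 < (x^T *m A *m x) ord0 ord0.

Definition gcd6 (a b c d e f : int) : int :=
  gcdz a (gcdz b (gcdz c (gcdz d (gcdz e f)))).

Definition tau3 (A : 'M[int]_3) : int :=
  gcd6 (ent A 0 0) (ent A 1 1) (ent A 2 2) (ent A 1 2) (ent A 0 2) (ent A 0 1).
Definition sigma3 (A : 'M[int]_3) : int :=
  gcd6 (ent A 0 0) (ent A 1 1) (ent A 2 2)
       (2 * ent A 1 2) (2 * ent A 0 2) (2 * ent A 0 1).

Definition primitive3 (A : 'M[int]_3) : Prop := tau3 A = 1.
Definition properly_primitive3 (A : 'M[int]_3) : Prop := tau3 A = 1 /\ sigma3 A = 1.
Definition improperly_primitive3 (A : 'M[int]_3) : Prop := tau3 A = 1 /\ sigma3 A = 2.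

Definition cof3 (A : 'M[int]_3) (i j : nat) : int := cofactor A (inord i) (inord j).

Definition Omega3 (A : 'M[int]_3) : int :=
  gcd6 (cof3 A 0 0) (cof3 A 1 1) (cof3 A 2 2) (cof3 A 1 2) (cof3 A 0 2) (cof3 A 0 1).

Definition has_invariants (A : 'M[int]_3) (Om De : int) : Prop :=
  Omega3 A = Om /\ \det A = De * Om ^+ 2.

Definition reciprocal3 (A : 'M[int]_3) : 'M[int]_3 :=
  \matrix_(i, j) ((cofactor A i j) %/ Omega3 A)%Z.

(* binary form (a, 2t, b) with matrix [[a, t], [t, b]] *)
Definition binmx (a t b : int) : 'M[int]_2 :=
  \matrix_(i, j) (if (i == ord0) && (j == ord0) then a
                  else if (i != ord0) && (j != ord0) then b else t).

Definition minor2 (M : 'M[int]_(3, 2)) (i k : nat) : int :=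
  M (inord i) ord0 * M (inord k) ord_max - M (inord k) ord0 * M (inord i) ord_max.

Definition represents (A : 'M[int]_3) (B : 'M[int]_2) : Prop :=
  exists M : 'M[int]_(3, 2), M^T *m A *m M = B.

Definition properly_represents (A : 'M[int]_3) (B : 'M[int]_2) : Prop :=
  exists M : 'M[int]_(3, 2), M^T *m A *m M = B /\
    gcdz (minor2 M 0 1) (gcdz (minor2 M 0 2) (minor2 M 1 2)) = 1.

(* Main.v *)
Require Import Defs.
From mathcomp Require Import all_boot all_order all_algebra.
From mathcomp Require Import zify ring lra.
Import Order.TTheory GRing.Theory Num.Theory.
Local Open Scope ring_scope.

Lemma det2 (B : 'M[int]_2) : \det B = B 0 0 * B 1 1 - B 0 1 * B 1 0.
Proof.
rewrite (expand_det_row _ 0) !big_ord_recr big_ord0 /= /cofactor !det_mx11 !mxE /=.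
have -> : lift 0 0 = 1 :> 'I_2 by apply/val_inj.
have -> : lift (widen_ord (leqnSn 1) ord_max) 0 = 1 :> 'I_2 by apply/val_inj.
have -> : lift ord_max 0 = 0 :> 'I_2 by apply/val_inj.
have -> : widen_ord (leqnSn 1) ord_max = 0 :> 'I_2 by apply/val_inj.
have -> : ord_max = 1 :> 'I_2 by apply/val_inj.
rewrite expr0 expr1 add0r mul1r; ring.
Qed.

Lemma iv0 : ((inord 0 : 'I_3) : nat) = 0%N. Proof. by rewrite inordK. Qed.
Lemma iv1 : ((inord 1 : 'I_3) : nat) = 1%N. Proof. by rewrite inordK. Qed.
Lemma iv2 : ((inord 2 : 'I_3) : nat) = 2%N. Proof. by rewrite inordK. Qed.

Lemma sum3 (F : 'I_3 -> int) : \sum_j F j = F (inord 0) + F (inord 1) + F (inord 2).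
Proof.
rewrite !big_ord_recr big_ord0 /= add0r.
congr (F _ + F _ + F _); apply/val_inj; by rewrite /= inordK.
Qed.

Lemma ord3 (i : 'I_3) : [\/ i = inord 0, i = inord 1 | i = inord 2].
Proof.
case: i => [[|[|[|//]]]] Hi.
- by constructor 1; apply/val_inj; rewrite /= inordK.
- by constructor 2; apply/val_inj; rewrite /= inordK.
- by constructor 3; apply/val_inj; rewrite /= inordK.
Qed.

Definition e3 (x00 x11 x22 x12 x02 x01 : int) (i j : nat) : int :=
 match i, j with
 | 0,0 => x00 | 1,1 => x11 | 2,2 => x22
 | 1,2 => x12 | 2,1 => x12 | 0,2 => x02 | 2,0 => x02 | _,_ => x01 end.

Definition sym3 x00 x11 x22 x12 x02 x01 : 'M[int]_3 :=
  \matrix_(i, j) e3 x00 x11 x22 x12 x02 x01 i j.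

Section S.
Variables x00 x11 x22 x12 x02 x01 : int.
Let A := sym3 x00 x11 x22 x12 x02 x01.

Ltac cofs := rewrite /A /cof3 /cofactor det2 !mxE /= ?iv0 ?iv1 ?iv2 /bump /=; ring.

Lemma c00 : cof3 A 0 0 = x11 * x22 - x12 ^+ 2. Proof. cofs. Qed.
Lemma c11 : cof3 A 1 1 = x00 * x22 - x02 ^+ 2. Proof. cofs. Qed.
Lemma c22 : cof3 A 2 2 = x00 * x11 - x01 ^+ 2. Proof. cofs. Qed.
Lemma c12 : cof3 A 1 2 = x01 * x02 - x00 * x12. Proof. cofs. Qed.
Lemma c02 : cof3 A 0 2 = x01 * x12 - x11 * x02. Proof. cofs. Qed.
Lemma c01 : cof3 A 0 1 = x02 * x12 - x01 * x22. Proof. cofs. Qed.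

Lemma sym3E i j : (i < 3)%N -> (j < 3)%N -> A (inord i) (inord j) = e3 x00 x11 x22 x12 x02 x01 i j.
Proof. by move=> hi hj; rewrite /A mxE !inordK. Qed.

Lemma det3 : \det A = x00 * cof3 A 0 0 + x01 * cof3 A 0 1 + x02 * cof3 A 0 2.
Proof.
rewrite (expand_det_row _ (inord 0)) sum3 /cof3 !sym3E //.
Qed.

Lemma sym3T : symmx A.
Proof.
apply/matrixP => i j; rewrite !mxE.
by case: (ord3 i) => ->; case: (ord3 j) => ->; rewrite ?iv0 ?iv1 ?iv2.
Qed.

Lemma qf3 (x : 'cV[int]_3) : (x^T *m A *m x) 0 0 =
  let y0 := x (inord 0) 0 in let y1 := x (inord 1) 0 in let y2 := x (inord 2) 0 in
  x00 * y0 ^+ 2 + x11 * y1 ^+ 2 + x22 * y2 ^+ 2 + 2 * x12 * y1 * y2 + 2 * x02 * y0 * y2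
  + 2 * x01 * y0 * y1.
Proof.
rewrite !mxE sum3 !mxE !sum3 !mxE /= ?iv0 ?iv1 ?iv2 /=. ring.
Qed.
End S.

Lemma sum2 (F : 'I_2 -> int) : \sum_j F j = F 0 + F 1.
Proof.
rewrite !big_ord_recr big_ord0 /= add0r.
by congr (F _ + F _); apply/val_inj.
Qed.

Lemma ord2 (i : 'I_2) : i = 0 \/ i = 1.
Proof. case: i => [[|[|//]]] Hi; [left|right]; exact/val_inj. Qed.

Lemma binpos a t b : pos_def (binmx a t b) -> 0 < a.
Proof.
move=> H.
pose x : 'cV[int]_2 := \col_i (if (i:nat) == 0%N then 1 else 0).
have Hx : x != 0.
  apply/negP => /eqP h; have := congr1 (fun M : 'cV[int]_2 => M 0 0) h.
  by rewrite !mxE.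
have := H x Hx. rewrite !mxE sum2 !mxE !sum2 !mxE /=. lia.
Qed.

Lemma represent a t b u v w :
  properly_represents (sym3 a b w v u t) (binmx a t b).
Proof.
exists (\matrix_(i < 3, j < 2) (if (i:nat) == j then 1 else 0)); split.
  apply/matrixP => i j; case: (ord2 i) => ->; case: (ord2 j) => ->;
  rewrite !(mxE, sum3) /= ?iv0 ?iv1 ?iv2 /=; ring.
rewrite /minor2 !mxE /= ?iv0 ?iv1 ?iv2 /=.
by rewrite mulr1 mulr0 subr0 gcd1z.
Qed.

Lemma gcd6M m x1 x2 x3 x4 x5 x6 : 0 <= m ->
  gcd6 (m*x1) (m*x2) (m*x3) (m*x4) (m*x5) (m*x6) = m * gcd6 x1 x2 x3 x4 x5 x6.
Proof.
move=> hm; have e : `|m|%:Z = m by rewrite abszE ger0_norm.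
by rewrite /gcd6; do 5 rewrite -mulz_gcdr e.
Qed.

Lemma entrec (A : 'M[int]_3) i j : ent (reciprocal3 A) i j = (cof3 A i j %/ Omega3 A)%Z.
Proof. by rewrite /ent mxE. Qed.

Lemma cancelC (C x y : int) : C != 0 -> C * x = C * y -> x = y.
Proof. move=> hC; exact: mulfI. Qed.

Lemma dvd_gcd6 d x1 x2 x3 x4 x5 x6 :
  (d %| gcd6 x1 x2 x3 x4 x5 x6)%Z =
  [&& (d %| x1)%Z, (d %| x2)%Z, (d %| x3)%Z, (d %| x4)%Z, (d %| x5)%Z & (d %| x6)%Z].
Proof. by rewrite /gcd6 !dvdz_gcd. Qed.

Lemma two_eq (n : nat) : (n%:Z %| 2)%Z -> (2 %| n%:Z)%Z -> n%:Z = 2.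
Proof.
move=> h1 h2; have h1' : (n %| 2)%N := h1; have h2' : (2 %| n)%N := h2.
by have /eqP -> : n == 2%N by rewrite eqn_dvd h1' h2'.
Qed.

Lemma one_eq (n : nat) : (n%:Z %| 1)%Z -> n%:Z = 1.
Proof. move=> h1; have : (n %| 1)%N := h1. by rewrite dvdn1 => /eqP ->. Qed.

Lemma gcd4odd w : ~~ (2 %| w)%Z -> gcdz 4 w = 1.
Proof.
move=> h. rewrite /gcdz /=. have : coprime 4 `|w|.
  have h' : ~~ (2 %| `|w|)%N := h.
  by rewrite (_ : 4 = 2 ^ 2)%N // coprime_pexpl // coprime2n; rewrite dvdn2 negbK in h'.
by move/eqP => ->.
Qed.

Lemma sq_pos (x : int) : x != 0 -> 0 < x ^+ 2.
Proof. by move=> h; rewrite exprn_even_gt0. Qed.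
Lemma pos3l (x y z : int) : 0 < x -> 0 <= y -> 0 <= z -> 0 < x + y + z. Proof. lia. Qed.
Lemma pos3m (x y z : int) : 0 <= x -> 0 < y -> 0 <= z -> 0 < x + y + z. Proof. lia. Qed.
Lemma pos3r (x y z : int) : 0 <= x -> 0 <= y -> 0 < z -> 0 < x + y + z. Proof. lia. Qed.

Lemma assemble a t b u v w Om De C R S f11 f22 f12 :
  Om * C = a * b - t ^+ 2 ->
  C * u = - (t * R + a * S) -> C * v = - (b * R + t * S) ->
  C ^+ 2 * w = De * (Om * C) + (b * R ^+ 2 + 2 * t * R * S + a * S ^+ 2) ->
  C * f11 = De * b + S ^+ 2 -> C * f22 = De * a + R ^+ 2 -> C * f12 = R * S - De * t ->
  0 < C -> 0 < Om -> 0 < De -> 0 < a ->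
  ~~ (2 %| w)%Z -> (2 %| f11)%Z -> (2 %| f22)%Z -> (2 %| C)%Z ->
  gcd6 f11 f22 C R S f12 = 1 -> gcdz a (gcdz (2 * t) b) = 4 ->
  let A := sym3 a b w v u t in
    [/\ symmx A, pos_def A, properly_primitive3 A,
        has_invariants A Om De &
        properly_represents A (binmx a t b)] /\
    improperly_primitive3 (reciprocal3 A).
Proof.
move=> HO Hu Hv Hw H11 H22 H12 C0 O0 D0 a0 wodd e11 e22 eC g1 g4 A.
have Cn : C != 0 by rewrite gt_eqF.
have K00 : cof3 A 0 0 = Om * f11.
  rewrite c00; apply: (@cancelC (C ^+ 2)); first exact: expf_neq0.
  have -> : C ^+ 2 * (b * w - v ^+ 2) = b * (C ^+ 2 * w) - (C * v) ^+ 2 by ring.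
  have -> : C ^+ 2 * (Om * f11) = (Om * C) * (C * f11) by ring.
  rewrite Hw Hv H11 HO; ring.
have K11 : cof3 A 1 1 = Om * f22.
  rewrite c11; apply: (@cancelC (C ^+ 2)); first exact: expf_neq0.
  have -> : C ^+ 2 * (a * w - u ^+ 2) = a * (C ^+ 2 * w) - (C * u) ^+ 2 by ring.
  have -> : C ^+ 2 * (Om * f22) = (Om * C) * (C * f22) by ring.
  rewrite Hw Hu H22 HO; ring.
have K22 : cof3 A 2 2 = Om * C by rewrite c22 HO.
have K12 : cof3 A 1 2 = Om * R.
  rewrite c12; apply: (@cancelC C _ _ Cn).
  have -> : C * (t * u - a * v) = t * (C * u) - a * (C * v) by ring.
  have -> : C * (Om * R) = (Om * C) * R by ring.
  rewrite Hu Hv HO; ring.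
have K02 : cof3 A 0 2 = Om * S.
  rewrite c02; apply: (@cancelC C _ _ Cn).
  have -> : C * (t * v - b * u) = t * (C * v) - b * (C * u) by ring.
  have -> : C * (Om * S) = (Om * C) * S by ring.
  rewrite Hu Hv HO; ring.
have K01 : cof3 A 0 1 = Om * f12.
  rewrite c01; apply: (@cancelC (C ^+ 2)); first exact: expf_neq0.
  have -> : C ^+ 2 * (u * v - t * w) = (C * u) * (C * v) - t * (C ^+ 2 * w) by ring.
  have -> : C ^+ 2 * (Om * f12) = (Om * C) * (C * f12) by ring.
  rewrite Hw Hu Hv H12 HO; ring.
have Kdet : \det A = De * Om ^+ 2.
  rewrite det3 K00 K01 K02; apply: (@cancelC C _ _ Cn).
  have -> : C * (a * (Om * f11) + t * (Om * f12) + u * (Om * S)) =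
     Om * (a * (C * f11) + t * (C * f12) + (C * u) * S) by ring.
  have -> : C * (De * Om ^+ 2) = Om * De * (Om * C) by ring.
  rewrite H11 H12 Hu HO; ring.
have Om_abs : `|Om|%:Z = Om by rewrite gtz0_abs.
have KOm : Omega3 A = Om.
  by rewrite /Omega3 K00 K11 K22 K12 K02 K01 gcd6M ?g1 ?mulr1 // ltW.
have Omn : Om != 0 by rewrite gt_eqF.
split; last first.
  rewrite /improperly_primitive3 /tau3 /sigma3 !entrec KOm K00 K11 K22 K12 K02 K01 !mulKz //.
  split => //.
  set G := gcd6 _ _ _ _ _ _.
  have hG : (G %| G)%Z by exact: dvdzz.
  rewrite {2}/G dvd_gcd6 in hG; case/andP: hG => h1 /andP[h2 /andP[h3 /andP[h4 /andP[h5 h6]]]].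
  rewrite -/G in h1 h2 h3 h4 h5 h6.
  apply: two_eq.
    have : (G %| gcd6 (2*f11) (2*f22) (2*C) (2*R) (2*S) (2*f12))%Z.
      by rewrite dvd_gcd6 (dvdz_mull _ h1) (dvdz_mull _ h2) (dvdz_mull _ h3) h4 h5 h6.
    by rewrite gcd6M // g1 mulr1.
  rewrite dvd_gcd6 e11 e22 eC /= !dvdz_mulr //.
have e3A : forall i j, (i < 3)%N -> (j < 3)%N -> ent A i j = e3 a b w v u t i j.
  by move=> i j hi hj; rewrite /ent sym3E.
have gA : forall G : nat, (G%:Z %| a)%Z -> (G%:Z %| b)%Z -> (G%:Z %| 2 * t)%Z ->
     (G%:Z %| w)%Z -> G%:Z = 1.
  move=> G ha hb ht hw; apply: one_eq.
  suff H : (G%:Z %| gcdz 4 w)%Z by move: H; rewrite gcd4odd.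
  rewrite dvdz_gcd hw andbT -g4.
  by rewrite !dvdz_gcd ha hb ht.
split.
- exact: sym3T.
- move=> x Hx. rewrite qf3 /=.
  set y0 := x (inord 0) 0; set y1 := x (inord 1) 0; set y2 := x (inord 2) 0.
  have E1 : a * b - t ^+ 2 - Om * C = 0 by rewrite HO subrr.
  have E2 : a * v - t * u + Om * R = 0 by rewrite -K12 c12; ring.
  have E3 : a * w - u ^+ 2 - Om * f22 = 0 by rewrite -K11 c11 subrr.
  have E4 : C * f22 - De * a - R ^+ 2 = 0 by rewrite H22; ring.
  have key : a * C * (a * y0 ^+ 2 + b * y1 ^+ 2 + w * y2 ^+ 2 + 2 * v * y1 * y2 +
     2 * u * y0 * y2 + 2 * t * y0 * y1) =
     C * (a * y0 + t * y1 + u * y2) ^+ 2 + Om * (C * y1 - R * y2) ^+ 2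
     + a * De * Om * y2 ^+ 2
     + C * y1 ^+ 2 * (a * b - t ^+ 2 - Om * C) + 2 * C * y1 * y2 * (a * v - t * u + Om * R)
     + C * y2 ^+ 2 * (a * w - u ^+ 2 - Om * f22) + Om * y2 ^+ 2 * (C * f22 - De * a - R ^+ 2).
    ring.
  rewrite E1 E2 E3 E4 !mulr0 !addr0 in key.
  rewrite -(pmulr_rgt0 _ (mulr_gt0 a0 C0)) key.
  have nz : y0 != 0 \/ y1 != 0 \/ y2 != 0.
    case: (eqVneq y0 0) => [z0|]; last by left.
    case: (eqVneq y1 0) => [z1|]; last by right; left.
    case: (eqVneq y2 0) => [z2|]; last by right; right.
    exfalso; move/negP: Hx; apply; apply/eqP/matrixP => i j.
    rewrite (ord1 j) !mxE; by case: (ord3 i) => ->.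
  have s1 := sqr_ge0 (a * y0 + t * y1 + u * y2).
  have s2 := sqr_ge0 (C * y1 - R * y2).
  have s3 := sqr_ge0 y2.
  have P1 : 0 <= C * (a * y0 + t * y1 + u * y2) ^+ 2 by apply: mulr_ge0 (ltW C0) s1.
  have P2 : 0 <= Om * (C * y1 - R * y2) ^+ 2 by apply: mulr_ge0 (ltW O0) s2.
  have P3 : 0 <= a * De * Om * y2 ^+ 2.
    by apply: mulr_ge0 s3; apply: mulr_ge0 (ltW O0); apply: mulr_ge0 (ltW a0) (ltW D0).
  case: (eqVneq y2 0) => [z2|n2].
    have [z1|n1] := eqVneq y1 0.
      have n0 : y0 != 0 by case: nz => [//|[]]; rewrite ?z1 ?z2 eqxx.
      apply: pos3l P2 P3; apply: mulr_gt0 => //; rewrite z1 z2 !mulr0 !addr0.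
      by apply: sq_pos; rewrite mulf_neq0 // gt_eqF.
    apply: pos3m P1 _ P3; apply: mulr_gt0 => //; rewrite z2 mulr0 subr0.
    by apply: sq_pos; rewrite mulf_neq0 // gt_eqF.
  apply: pos3r P1 P2 _; apply: mulr_gt0; last exact: sq_pos.
  by apply: mulr_gt0 => //; apply: mulr_gt0.
- rewrite /properly_primitive3 /tau3 /sigma3 !e3A //=; split.
    have := dvdzz (gcd6 a b w v u t); rewrite dvd_gcd6.
    case/andP=> h1 /andP[h2 /andP[h3 /andP[h4 /andP[h5 h6]]]].
    apply: gA; [exact: h1 | exact: h2 | exact: dvdz_mull h6 | exact: h3].
  have := dvdzz (gcd6 a b w (2 * v) (2 * u) (2 * t)); rewrite dvd_gcd6.
  case/andP=> h1 /andP[h2 /andP[h3 /andP[h4 /andP[h5 h6]]]].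
  apply: gA; [exact: h1 | exact: h2 | exact: h6 | exact: h3].
- by split.
- exact: represent.
Qed.

Lemma pEuclid (p : nat) (x y : int) : prime p -> (p%:Z %| x * y)%Z ->
  (p%:Z %| x)%Z || (p%:Z %| y)%Z.
Proof.
move=> pp H; have h : (p %| absz (x * y)%R)%N := H.
by rewrite abszM Euclid_dvdM in h.
Qed.

Lemma coprimez_of (m n : int) : gcdz m n = 1 -> coprimez m n.
Proof. by rewrite /coprimez /gcdz => -[->]. Qed.

Lemma no_p4 (p : nat) : prime p -> odd p -> ~~ (p %| 4)%N.
Proof.
move=> pp po; apply/negP => h; have := dvdn_leq (isT : (0 < 4)%N) h.
by move: pp po h; case: p => [|[|[|[|[|p]]]]].
Qed.

Lemma NPlemma (p : nat) (a t b C De R S k1 k2 k3 : int) :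
  prime p -> odd p -> C = 2 * p%:Z -> coprimez C De ->
  gcdz a (gcdz (2 * t) b) = 4 ->
  R ^+ 2 + De * a = k1 * C -> R * S - De * t = k2 * C -> S ^+ 2 + De * b = k3 * C ->
  ~~ ((p%:Z %| R)%Z && (p%:Z %| S)%Z).
Proof.
move=> pp po HC cop g4 h1 h2 h3; apply/negP => /andP[/dvdzP[r hr] /dvdzP[s hs]].
have cp : coprimez p%:Z De.
  apply: (@coprimez_dvdl p `|C|) cop; rewrite HC abszM /=; exact: dvdn_mull.
have pa : (p%:Z %| a)%Z.
  rewrite -(Gauss_dvdzr _ cp); apply/dvdzP; exists (2 * k1 - r ^+ 2 * p%:Z).
  subst R C; lia.
have pb : (p%:Z %| b)%Z.
  rewrite -(Gauss_dvdzr _ cp); apply/dvdzP; exists (2 * k3 - s ^+ 2 * p%:Z).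
  subst S C; lia.
have pt : (p%:Z %| t)%Z.
  rewrite -(Gauss_dvdzr _ cp); apply/dvdzP; exists (r * s * p%:Z - 2 * k2).
  subst R S C; lia.
have h : (p%:Z %| gcdz a (gcdz (2 * t) b))%Z by rewrite !dvdz_gcd pa pb dvdz_mull.
rewrite g4 in h; have h' : (p %| 4)%N := h.
by move: h'; apply/negP; apply: no_p4.
Qed.

Lemma cdiv (c : nat) (C R S Y : int) :
  C = 2 * c%:Z -> (c = 1%N \/ prime c /\ odd c) ->
  (prime c -> ~~ ((c%:Z %| R)%Z && (c%:Z %| S)%Z)) ->
  (C %| R * Y)%Z -> (C %| S * Y)%Z -> (2 %| Y)%Z -> (C %| Y)%Z.
Proof.
move=> HC hc NP hR hS h2.
case: hc => [c1|[pc oc]]; first by rewrite HC c1.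
have cop : coprimez 2 c%:Z by rewrite coprimezE /= coprime2n.
rewrite HC Gauss_dvdz // h2 /=.
have pC : (c%:Z %| C)%Z by rewrite HC dvdz_mull.
have := pEuclid _ _ _ pc (dvdz_trans pC hR); have := pEuclid _ _ _ pc (dvdz_trans pC hS).
case/orP => [hs|//]; case/orP => [hr|//].
by move: (NP pc); rewrite hr hs.
Qed.

Lemma tau1 (n c : nat) (C R S f12 : int) :
  C = 2 * c%:Z -> (c = 1%N \/ prime c /\ odd c) ->
  (prime c -> ~~ ((c%:Z %| R)%Z && (c%:Z %| S)%Z)) -> ~~ (2 %| f12)%Z ->
  (n%:Z %| C)%Z -> (n%:Z %| R)%Z -> (n%:Z %| S)%Z -> (n%:Z %| f12)%Z -> n%:Z = 1.
Proof.
move=> HC hc NP o12 hC hR hS hf.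
have no : odd n.
  apply/negPn/negP => en; move/negP: o12; apply.
  apply: dvdz_trans hf; have : (2 %| n)%N by rewrite dvdn2.
  by [].
have ndc : (n %| c)%N.
  have : (n %| absz C)%N := hC.
  rewrite HC abszM /= mulnC Gauss_dvdl //; by rewrite coprimen2.
case: hc => [c1|[pc oc]]; first by move: ndc; rewrite c1 dvdn1 => /eqP ->.
case: (eqVneq n 1%N) => [->//|n1].
have e := (prime_nt_dvdP pc n1); move/e: ndc => ndc; subst n.
by move: (NP pc); rewrite hR hS.
Qed.

Lemma HOlem (a t b O C : int) : (2*t)^+2 - 4*a*b = -(4*O*C) -> O*C = a*b - t^+2.
Proof. lia. Qed.

Lemma odd_form (x : int) : ~~ (2 %| x)%Z -> exists m, x = 2 * m + 1.
Proof. move=> h; exists (x %/ 2)%Z; lia. Qed.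

Lemma t_form (t : int) : (2 %| t)%Z -> ~~ (4 %| t)%Z -> exists q, t = 4 * q + 2.
Proof. move=> h1 h2; exists (t %/ 4)%Z; lia. Qed.

Lemma P1 (x y k C : int) : (2 %| C)%Z -> (4 %| y)%Z -> x ^+ 2 + y = k * C -> exists r, x = 2 * r.
Proof.
move=> /dvdzP [c ->] /dvdzP [z ->] h.
have [m hm] : exists m, x = 2 * m \/ x = 2 * m + 1 by exists (x %/ 2)%Z; lia.
case: hm => hm; first by exists m.
exfalso; subst x; lia.
Qed.

Lemma Pev (C f Y j : int) : C = 2 * (2 * j + 1) -> (4 %| Y)%Z -> C * f = Y -> (2 %| f)%Z.
Proof.
move=> -> /dvdzP [z ->] h.
have [m hm] : exists m, f = 2 * m \/ f = 2 * m + 1 by exists (f %/ 2)%Z; lia.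
case: hm => hm; first by apply/dvdzP; exists m; lia.
exfalso; subst f; lia.
Qed.

Lemma Pod (C f Y j : int) : C = 2 * (2 * j + 1) -> (exists m, Y = 4 * m + 2) -> C * f = Y ->
  ~~ (2 %| f)%Z.
Proof.
move=> -> [z ->] h; apply/negP => /dvdzP [m hm]; subst f; lia.
Qed.

Lemma Pw (C w Z j : int) : C = 2 * (2 * j + 1) -> (exists m, Z = 8 * m + 4) -> C ^+ 2 * w = Z ->
  ~~ (2 %| w)%Z.
Proof.
move=> -> [z ->] h; apply/negP => /dvdzP [m hm]; subst w; lia.
Qed.

Lemma numth (a t b Om C De : int) :
  (2 * t) ^+ 2 - 4 * a * b = - (4 * Om * C) ->
  (2 %| t)%Z -> ~~ (4 %| t)%Z ->
  gcdz a (gcdz (2 * t) b) = 4 ->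
  (C = 2 \/ exists p : nat, [/\ prime p, odd p & C = 2 * p%:Z]) ->
  0 < Om -> ~~ (2 %| De)%Z -> gcdz C De = 1 ->
  (exists R S : int, [/\ (C %| R ^+ 2 + De * a)%Z,
                         (C %| R * S - De * t)%Z &
                         (C %| S ^+ 2 + De * b)%Z]) ->
  exists u v w R S f11 f22 f12 : int,
  [/\ Om * C = a * b - t ^+ 2,
  C * u = - (t * R + a * S), C * v = - (b * R + t * S),
  C ^+ 2 * w = De * (Om * C) + (b * R ^+ 2 + 2 * t * R * S + a * S ^+ 2) &
  [/\ C * f11 = De * b + S ^+ 2, C * f22 = De * a + R ^+ 2, C * f12 = R * S - De * t,
  0 < C &
  [/\ ~~ (2 %| w)%Z, (2 %| f11)%Z, (2 %| f22)%Z, (2 %| C)%Z &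
  gcd6 f11 f22 C R S f12 = 1]]].
Proof.
move=> Hd t2 t4 g4 HCc O0 Dodd gCD [R [S [hk1 hk2 hk3]]].
have HO : Om * C = a * b - t ^+ 2 by apply: HOlem.
have [c [HC hc]] : exists c : nat, C = 2 * c%:Z /\ (c = 1%N \/ prime c /\ odd c).
  case: HCc => [->|[p [pp po ->]]]; first by exists 1%N; split => //; left.
  by exists p; split => //; right.
have C0 : 0 < C by rewrite HC; case: hc => [->//|[pc _]]; rewrite pmulr_rgt0 // ltz_nat prime_gt0.
have cop : coprimez C De by apply: coprimez_of.
have NP : prime c -> ~~ ((c%:Z %| R)%Z && (c%:Z %| S)%Z).
  move=> pc; have oc : odd c by case: hc => [->|[]].
  case/dvdzP: hk1 => k1 h1; case/dvdzP: hk2 => k2 h2; case/dvdzP: hk3 => k3 h3.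
  exact: (@NPlemma c a t b C De R S k1 k2 k3 pc oc HC cop g4 h1 h2 h3).
case/dvdzP: hk1 => k1 h1; case/dvdzP: hk2 => k2 h2; case/dvdzP: hk3 => k3 h3.
have [j hj] : exists j : int, c%:Z = 2 * j + 1.
  apply: odd_form.
  have : odd c by case: hc => [->|[]].
  by rewrite -[odd c]negbK -dvdn2.
have [a1 ha] : exists a1, a = a1 * 4.
  apply/dvdzP; have h : (4 %| gcdz a (gcdz (2 * t) b))%Z by rewrite g4.
  by rewrite dvdz_gcd in h; case/andP: h.
have [b1 hb] : exists b1, b = b1 * 4.
  apply/dvdzP; have h : (4 %| gcdz a (gcdz (2 * t) b))%Z by rewrite g4.
  by rewrite !dvdz_gcd in h; case/and3P: h.
have [q hq] := t_form _ t2 t4.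
have [d hd] := odd_form _ Dodd.
have HCj : C = 2 * (2 * j + 1) by rewrite HC hj.
have C2 : (2 %| C)%Z by rewrite HC dvdz_mulr.
have [r hr] : exists r, R = 2 * r.
  apply: (P1 _ _ _ _ C2 _ h1); apply/dvdzP; exists (De * a1); rewrite ha; ring.
have [s hs] : exists s, S = 2 * s.
  apply: (P1 _ _ _ _ C2 _ h3); apply/dvdzP; exists (De * b1); rewrite hb; ring.
have X2 : (2 %| t * R + a * S)%Z.
  apply/dvdzP; exists ((2 * q + 1) * R + 2 * a1 * S); rewrite hq ha; ring.
have Y2 : (2 %| b * R + t * S)%Z.
  apply/dvdzP; exists (2 * b1 * R + (2 * q + 1) * S); rewrite hq hb; ring.
have CX : (C %| t * R + a * S)%Z.
  apply: (cdiv _ _ _ _ _ HC hc NP _ _ X2).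
    apply/dvdzP; exists (t * k1 + a * k2).
    have -> : R * (t * R + a * S) = t * (R ^+ 2 + De * a) + a * (R * S - De * t) by ring.
    rewrite h1 h2; ring.
  apply/dvdzP; exists (t * k2 + a * k3 - De * Om).
  have -> : S * (t * R + a * S) = t * (R * S - De * t) + a * (S ^+ 2 + De * b) - De * (Om * C).
    by rewrite HO; ring.
  rewrite h2 h3; ring.
have CY : (C %| b * R + t * S)%Z.
  apply: (cdiv _ _ _ _ _ HC hc NP _ _ Y2).
    apply/dvdzP; exists (b * k1 + t * k2 - De * Om).
    have -> : R * (b * R + t * S) = b * (R ^+ 2 + De * a) + t * (R * S - De * t) - De * (Om * C).
      by rewrite HO; ring.
    rewrite h1 h2; ring.
  apply/dvdzP; exists (b * k2 + t * k3).
  have -> : S * (b * R + t * S) = b * (R * S - De * t) + t * (S ^+ 2 + De * b) by ring.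
  rewrite h2 h3; ring.
case/dvdzP: CX => u0 hu0; case/dvdzP: CY => v0 hv0.
set Z := De * (Om * C) + (b * R ^+ 2 + 2 * t * R * S + a * S ^+ 2).
have CZ : (C ^+ 2 %| Z * De)%Z.
  apply/dvdzP; exists (k1 * k3 - k2 ^+ 2).
  have -> : Z * De = (S ^+ 2 + De * b) * (R ^+ 2 + De * a) - (R * S - De * t) ^+ 2.
    by rewrite /Z HO; ring.
  rewrite h1 h2 h3; ring.
rewrite Gauss_dvdzl in CZ; last exact: coprimezXl.
case/dvdzP: CZ => w hw.
exists (- u0), (- v0), w, R, S, k3, k1, k2.
have Hw : C ^+ 2 * w = Z by rewrite hw mulrC.
have wodd : ~~ (2 %| w)%Z.
  apply: (Pw _ _ _ _ HCj _ Hw).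
  pose X := a1 * b1 - q ^+ 2 - q.
  exists (4 * d * X + 2 * X - d - 1 + 2 * (b1 * r ^+ 2 + (2 * q + 1) * r * s + a1 * s ^+ 2)).
  rewrite /Z HO /X ha hb hq hr hs hd; ring.
have e11 : (2 %| k3)%Z.
  have E : C * k3 = S ^+ 2 + De * b by rewrite h3 mulrC.
  apply: (Pev _ _ _ _ HCj _ E).
  apply/dvdzP; exists ((2 * d + 1) * b1 + s ^+ 2); rewrite hd hb hs; ring.
have e22 : (2 %| k1)%Z.
  have E : C * k1 = R ^+ 2 + De * a by rewrite h1 mulrC.
  apply: (Pev _ _ _ _ HCj _ E).
  apply/dvdzP; exists ((2 * d + 1) * a1 + r ^+ 2); rewrite hd ha hr; ring.
have o12 : ~~ (2 %| k2)%Z.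
  have E : C * k2 = R * S - De * t by rewrite h2 mulrC.
  apply: (Pod _ _ _ _ HCj _ E).
  exists (r * s - 2 * d * q - d - q - 1); rewrite hr hs hd hq; ring.
split => //.
- by rewrite hu0; ring.
- by rewrite hv0; ring.
- split => //.
  + by rewrite [C * _]mulrC -h3 addrC.
  + by rewrite [C * _]mulrC -h1 addrC.
  + by rewrite [C * _]mulrC -h2.
  split => //.
  have := dvdzz (gcd6 k3 k1 C R S k2); rewrite dvd_gcd6.
  case/andP=> g1 /andP[g2 /andP[g3 /andP[g5 /andP[g6 g7]]]].
  exact: (tau1 _ _ _ _ _ _ HC hc NP o12 g3 g5 g6 g7).
Qed.

Theorem mainTheorem2 (a t b Om C De : int) :
  pos_def (binmx a t b) ->
  (2 * t) ^+ 2 - 4 * a * b = - (4 * Om * C) ->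
  - (4 * Om * C) < 0 ->
  (2 %| t)%Z -> ~~ (4 %| t)%Z ->
  gcdz a (gcdz (2 * t) b) = 4 ->
  (C = 2 \/ exists p : nat, [/\ prime p, odd p & C = 2 * p%:Z]) ->
  0 < Om -> (2 %| Om)%Z ->
  0 < De -> ~~ (2 %| De)%Z -> gcdz C De = 1 ->
  (exists R S : int, [/\ (C %| R ^+ 2 + De * a)%Z,
                         (C %| R * S - De * t)%Z &
                         (C %| S ^+ 2 + De * b)%Z]) ->
  exists A : 'M[int]_3,
    [/\ symmx A, pos_def A, properly_primitive3 A,
        has_invariants A Om De &
        properly_represents A (binmx a t b)] /\
    improperly_primitive3 (reciprocal3 A).
Proof.
move=> Hpd Hd Hneg t2 t4 g4 HCc O0 Om2 D0 Dodd gCD HRS.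
have a0 := binpos _ _ _ Hpd.
have [u [v [w [R [S [f11 [f22 [f12 [HO Hu Hv Hw [H11 H22 H12 C0 [wodd e11 e22 eC g1]]]]]]]]]]] :=
  numth _ _ _ _ _ _ Hd t2 t4 g4 HCc O0 Dodd gCD HRS.
exists (sym3 a b w v u t).
exact: (assemble _ _ _ _ _ _ _ _ _ _ _ _ _ _ HO Hu Hv Hw H11 H22 H12 C0 O0 D0 a0 wodd e11 e22 eC g1 g4).
Qed.
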